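(* Let $T$ be a tree of order at least $6$. Then $T\in\mathcal{O}'$ if and only if the set of weak support vertices of $T$ is a maximum $2$-packing in $T$.
   Context: A weak support vertex is a vertex adjacent to exactly one leaf. A $2$-packing of a graph $G$ is a set $S\subseteq V(G)$ whose vertices are pairwise at distance at least $3$; a maximum $2$-packing is one of maximum cardinality $\rho(G)$. $2$-subdivision: let $G$ be a connected graph of order at least $2$ and $\mathcal{P}=\{\mathcal{P}(v):v\in V(G)\}$ where $\mathcal{P}(v)$ is a partition of $N_G(v)$ (into nonempty blocks). $G(\mathcal{P})$ has vertex set $V(G)\cup(V(G)\times\{1\})\cup\bigcup_{v\in V(G)}(\{v\}\times\mathcal{P}(v))$ and edge set $E_1\cup E_2\cup E_3$, where $E_1=\{v(v,1):v\in V(G)\}$, $E_2=\{v(v,A): v\in V(G), A\in\mathcal{P}(v)\}$, and $E_3=\{(u,A)(v,B): uv\in E(G), A\in\mathcal{P}(u), B\in\mathcal{P}(v), v\in A, u\in B\}$. $\mathcal{O}'$ is the family of all trees isomorphic to some $R(\mathcal{P})$ where $R$ is a tree of order at least $2$ and $\mathcal{P}$ is such a family of partitions. *)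

(* Defs.v *)
From mathcomp Require Import all_boot.
Set Implicit Arguments. Unset Strict Implicit. Unset Printing Implicit Defensive.

Section Graphs.
Variable T : finType.

Definition simple_graph (e : rel T) : Prop := symmetric e /\ irreflexive e.

(* no cycle: no simple closed walk x :: p with at least 3 vertices *)
Definition acyclic (e : rel T) : Prop :=
  forall (x : T) (p : seq T), path e x p -> uniq (x :: p) -> 2 <= size p ->
    ~~ e (last x p) x.

Definition connected (e : rel T) : Prop := forall x y : T, connect e x y.

Definition is_tree (e : rel T) : Prop := simple_graph e /\ connected e /\ acyclic e.

Definition nbhd (e : rel T) (v : T) : {set T} := [set w | e v w].

Definition leaf (e : rel T) (v : T) : bool := #|nbhd e v| == 1.

Definition weak_support (e : rel T) (v : T) : bool :=
  #|[set w | e v w & leaf e w]| == 1.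

Definition weak_supports (e : rel T) : {set T} := [set v | weak_support e v].

Definition dist_ge3 (e : rel T) (u v : T) : Prop :=
  forall p : seq T, path e u p -> last u p = v -> 3 <= size p.

Definition two_packing (e : rel T) (S : {set T}) : Prop :=
  forall u v, u \in S -> v \in S -> u != v -> dist_ge3 e u v.

Definition max_two_packing (e : rel T) (S : {set T}) : Prop :=
  two_packing e S /\ forall S' : {set T}, two_packing e S' -> #|S'| <= #|S|.

End Graphs.

Definition isomorphic (T1 T2 : finType) (e1 : rel T1) (e2 : rel T2) : Prop :=
  exists f : T1 -> T2, bijective f /\ forall x y, e2 (f x) (f y) = e1 x y.

(* The 2-subdivision G(P).  Raw vertices: inl (inl v) = v, inl (inr v) = (v,1),
   inr (v, A) = (v, A); the vertices (v,A) are kept only when A \in P v. *)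
Section Subdivision.
Variables (V : finType) (eR : rel V) (P : V -> {set {set V}}).

Definition sub_raw : finType := ((V + V) + (V * {set V}))%type.

Definition sub_valid (x : sub_raw) : bool :=
  match x with
  | inr (v, A) => A \in P v
  | _ => true
  end.

Definition sub_vert : finType := {x : sub_raw | sub_valid x}.

Definition sub_raw_adj (x y : sub_raw) : bool :=
  match x, y with
  | inl (inl v), inl (inr w) => v == w
  | inl (inr v), inl (inl w) => v == w
  | inl (inl v), inr (w, _) => v == w
  | inr (w, _), inl (inl v) => v == w
  | inr (u, A), inr (v, B) => [&& eR u v, v \in A & u \in B]
  | _, _ => false
  end.

Definition sub_adj : rel sub_vert := fun x y => sub_raw_adj (val x) (val y).

End Subdivision.

Definition in_Oprime (T : finType) (e : rel T) : Prop :=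
  exists (V : finType) (eR : rel V),
    is_tree eR /\ 2 <= #|V| /\
    exists P : V -> {set {set V}},
      (forall v, partition (P v) (nbhd eR v)) /\
      isomorphic e (@sub_adj V eR P).

(* Main.v *)
Require Import Defs.
From mathcomp Require Import all_boot.
Set Implicit Arguments. Unset Strict Implicit. Unset Printing Implicit Defensive.


Lemma dist3P (T : finType) (e : rel T) u v :
  dist_ge3 e u v <-> [/\ u != v, ~~ e u v & forall m, ~~ (e u m && e m v)].
Proof.
split.
- move=> H; split.
  + apply/eqP=> E; have := H [::] isT; rewrite /= E => /(_ erefl); done.
  + apply/negP=> E; have := H [:: v]; rewrite /= E => /(_ isT erefl); done.
  + move=> m; apply/negP=> /andP[E1 E2].
    have := H [:: m; v]; rewrite /= E1 E2 => /(_ isT erefl); done.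
- case=> H1 H2 H3 [|a [|b [|c p]]] //=.
  + by move=> _ E; rewrite E eqxx in H1.
  + by rewrite andbT => E Ea; subst a; rewrite E in H2.
  + rewrite andbT => /andP[E1 E2] E3; subst b.
    by have := H3 a; rewrite E1 E2.
Qed.

Section Iso.
Variables (T1 T2 : finType) (e1 : rel T1) (e2 : rel T2) (f : T1 -> T2).
Hypothesis fbij : bijective f.
Hypothesis fe : forall x y, e2 (f x) (f y) = e1 x y.

Lemma iso_inj : injective f. Proof. exact: bij_inj. Qed.

Lemma iso_card (p1 : pred T1) (p2 : pred T2) :
  (forall x, p2 (f x) = p1 x) -> #|[set y | p2 y]| = #|[set x | p1 x]|.
Proof.
move=> H; have -> : [set y | p2 y] = f @: [set x | p1 x].
  apply/setP=> y; case: fbij => g fg gf.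
  rewrite -(gf y) inE H; apply/idP/imsetP.
  - by move=> Hp; exists (g y); rewrite ?inE.
  - by case=> x; rewrite inE => Hx /iso_inj ->.
by rewrite card_imset //; apply: iso_inj.
Qed.

Lemma iso_leaf x : leaf e2 (f x) = leaf e1 x.
Proof. by rewrite /leaf /nbhd (@iso_card (e1 x) (e2 (f x))) // => y; rewrite fe. Qed.

Lemma iso_ws x : weak_support e2 (f x) = weak_support e1 x.
Proof.
rewrite /weak_support (@iso_card (fun w => e1 x w && leaf e1 w) (fun w => e2 (f x) w && leaf e2 w)) //.
by move=> y; rewrite fe iso_leaf.
Qed.

Lemma iso_dist u v : dist_ge3 e2 (f u) (f v) <-> dist_ge3 e1 u v.
Proof.
split=> /dist3P [H1 H2 H3]; apply/dist3P; rewrite (inj_eq iso_inj) fe in H1 H2 *; split=> // m.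
- by rewrite -!fe.
- case: fbij => g fg gf; rewrite -(gf m) !fe; exact: H3.
Qed.

End Iso.


Section Fwd.
Variables (V : finType) (eR : rel V) (P : V -> {set {set V}}).
Hypothesis eRs : symmetric eR.
Hypothesis hnb : forall v, exists u, eR v u.
Hypothesis hP : forall v, partition (P v) (nbhd eR v).

Local Notation SV := (sub_vert P).
Local Notation sa := (sub_adj eR (P:=P)).

Definition vV (v : V) : SV := exist _ (inl (inl v)) isT.
Definition vR (v : V) : SV := exist _ (inl (inr v)) isT.
Definition isV (z : SV) : bool := if val z is inl (inl _) then true else false.
Definition isR (z : SV) : bool := if val z is inl (inr _) then true else false.
Definition base (z : SV) : V :=
  match val z with inl (inl v) => v | inl (inr v) => v | inr (v, _) => v end.

Lemma blockP v A u : A \in P v -> u \in A -> eR v u.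
Proof.
move=> HA Hu; case/and3P: (hP v) => /eqP Hc _ _.
have : u \in cover (P v) by apply/bigcupP; exists A.
by rewrite Hc inE.
Qed.

Lemma block0 v A : A \in P v -> exists u, u \in A.
Proof.
move=> HA; case/and3P: (hP v) => _ _ H0.
case: (set_0Vmem A) => [E|[x Hx]]; [by rewrite -E HA in H0 | by exists x].
Qed.

Lemma pblock_in v u : eR v u -> pblock (P v) u \in P v /\ u \in pblock (P v) u.
Proof.
move=> H; case/and3P: (hP v) => /eqP Hc Ht H0.
have Hu : u \in cover (P v) by rewrite Hc inE.
split; [exact: pblock_mem | by rewrite mem_pblock].
Qed.

Definition vB (v u : V) : SV := insubd (vV v) (inr (v, pblock (P v) u)).

Lemma vB_val v u : eR v u -> val (vB v u) = inr (v, pblock (P v) u).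
Proof. by move=> H; rewrite /vB insubdK //; case: (pblock_in H). Qed.

Lemma base_adj z : z = vV (base z) \/ sa (vV (base z)) z.
Proof.
case: z => [[[v|v]|[v A]] Hz]; rewrite /base /=.
- by left; apply: val_inj.
- by right; rewrite /sub_adj /= eqxx.
- by right; rewrite /sub_adj /= eqxx.
Qed.

Lemma sa_sym : symmetric sa.
Proof.
move=> x y; rewrite /sub_adj.
case: (val x) => [[v|v]|[v A]]; case: (val y) => [[w|w]|[w B]] //=; try by rewrite eq_sym.
by rewrite eRs; congr (_ && _); rewrite andbC.
Qed.

Lemma sa_vV v z : sa (vV v) z = (z == vR v) || (if val z is inr (w, _) then v == w else false).
Proof.
case: z => [[[w|w]|[w A]] Hz]; rewrite /sub_adj /= ?orbF //=.
apply/idP/idP=> [/eqP ->|/eqP [] ->] //.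
by rewrite /vR; apply/eqP; apply: val_inj.
Qed.

Lemma leaf_sub z : leaf sa z = isR z.
Proof.
rewrite /leaf /nbhd; case: z => [[[v|v]|[v A]] Hz]; rewrite [isR _]/=.
- apply: negbTE; apply/negP=> /eqP H.
  have [u Hu] := hnb v; have [HB _] := pblock_in Hu.
  have : 1 < #|[set w | sa (exist _ (inl (inl v)) Hz) w]|.
    apply/card_gt1P; exists (vR v), (vB v u).
    rewrite !inE /sub_adj (vB_val Hu) /= !eqxx; split=> //.
    by apply/negP=> /eqP/(congr1 val); rewrite (vB_val Hu).
  by rewrite H.
- apply/cards1P; exists (vV v); apply/setP=> z; rewrite !inE.
  case: z => [[[w|w]|[w B]] Hw]; rewrite /sub_adj /= //.
  + apply/idP/idP=> [/eqP ->|/eqP [] ->] //.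
    by apply/eqP; apply: val_inj.
- apply: negbTE; apply/negP=> /eqP H.
  have [u Hu] := block0 Hz; have HvU := blockP Hz Hu.
  have HuV : eR u v by rewrite eRs.
  have [HB HvB] := pblock_in HuV.
  have : 1 < #|[set w | sa (exist _ (inr (v, A)) Hz) w]|.
    apply/card_gt1P; exists (vV v), (vB u v).
    rewrite !inE /sub_adj (vB_val HuV) /= !eqxx HvU Hu HvB; split=> //.
    by apply/negP=> /eqP/(congr1 val); rewrite (vB_val HuV).
  by rewrite H.
Qed.

Lemma ws_sub z : weak_support sa z = isV z.
Proof.
rewrite /weak_support.
case: z => [[[v|v]|[v A]] Hz]; rewrite [isV _]/=.
- apply/cards1P; exists (vR v); apply/setP=> z; rewrite !inE leaf_sub.
  case: z => [[[w|w]|[w B]] Hw]; rewrite /sub_adj /isR /= ?andbF //.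
  + rewrite andbT; apply/idP/idP=> [/eqP ->|/eqP [] ->] //.
    by apply/eqP; apply: val_inj.
- apply: negbTE; rewrite (_ : [set w | _ ] = set0) ?cards0 //; apply/setP=> z; rewrite !inE leaf_sub.
  by case: z => [[[w|w]|[w B]] Hw]; rewrite /sub_adj /isR /= ?andbF.
- apply: negbTE; rewrite (_ : [set w | _ ] = set0) ?cards0 //; apply/setP=> z; rewrite !inE leaf_sub.
  by case: z => [[[w|w]|[w B]] Hw]; rewrite /sub_adj /isR /= ?andbF.
Qed.

Lemma isV_vV z : isV z -> z = vV (base z).
Proof. by case: z => [[[v|v]|[v A]] Hz] //= _; apply: val_inj. Qed.

Lemma pack_sub : two_packing sa [set z | isV z].
Proof.
move=> z1 z2; rewrite !inE => /isV_vV -> /isV_vV ->.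
set u := base z1; set v := base z2 => Huv.
apply/dist3P; split.
- exact: Huv.
- by rewrite /sub_adj.
move=> m; rewrite sa_vV; apply/negP => /andP[H1].
rewrite sa_sym sa_vV; case/orP: H1 => [/eqP -> | ].
  rewrite /= orbF => /eqP/(congr1 val) [E]; by rewrite E eqxx in Huv.
case: m => [[[w|w]|[w B]] Hw] //= /eqP Eu; subst w.
by move/eqP=> E; rewrite E eqxx in Huv.
Qed.

Lemma bound_sub (S : {set SV}) : two_packing sa S -> #|S| <= #|V|.
Proof.
move=> HS; rewrite -(@card_in_imset _ _ base S); last first.
  move=> z1 z2 H1 H2 E; apply/eqP; apply/negP=> /negP Hne.
  have /dist3P [_ Ha Hb] := HS _ _ H1 H2 Hne.
  have E2 := base_adj z2; rewrite -E in E2.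
  case: (base_adj z1) => E1; case: E2 => E2.
  - by move: Hne; rewrite {1}E1 {1}E2 eqxx.
  - by move: Ha; rewrite {1}E1 E2.
  - by move: Ha; rewrite {1}E2 sa_sym E1.
  - by have := Hb (vV (base z1)); rewrite sa_sym E1 E2.
exact: max_card.
Qed.

Lemma card_isV : #|V| <= #|[set z | isV z]|.
Proof.
have inj : injective vV by move=> u v /(congr1 val) [].
rewrite -cardsT -(card_imset _ inj); apply: subset_leq_card; apply/subsetP=> z /imsetP [v _ ->].
by rewrite inE.
Qed.

End Fwd.


Lemma has_nb (V : finType) (eR : rel V) :
  connected eR -> 2 <= #|V| -> forall v, exists u, eR v u.
Proof.
move=> conn c2 v.
have : 0 < #|[set~ v]| by rewrite cardsC1; case: #|V| c2 => [|[|n]].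
case/card_gt0P=> u; rewrite !inE => Huv.
case/connectP: (conn v u) => [[|a p]] /= Hp Hl.
  by rewrite Hl eqxx in Huv.
by case/andP: Hp => Ha _; exists a.
Qed.

Lemma forward (T : finType) (e : rel T) :
  in_Oprime e -> max_two_packing e (weak_supports e).
Proof.
case=> V [eR [[[eRs eRirr] [conn acyc]] [c2 [P [hP [f [fbij fe]]]]]]].
have hnb := has_nb conn c2.
have finj := iso_inj fbij.
have HW : weak_supports e = [set x | isV (f x)].
  apply/setP=> x; rewrite !inE -(iso_ws fbij fe) ws_sub //.
split.
- move=> x1 x2; rewrite HW !inE => H1 H2 Hne.
  apply/(iso_dist fbij fe); apply: pack_sub => //; rewrite ?inE //.
  by rewrite (inj_eq finj).
- move=> S HS.
  rewrite -(card_imset _ finj).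
  have HS' : two_packing (sub_adj eR (P:=P)) (f @: S).
    move=> z1 z2 /imsetP [x1 H1 ->] /imsetP [x2 H2 ->].
    rewrite (inj_eq finj) => Hne; apply/(iso_dist fbij fe); exact: HS.
  apply: leq_trans (bound_sub eRs HS') _.
  apply: leq_trans (card_isV P) _.
  by rewrite HW (iso_card fbij (p1 := fun x => isV (f x))).
Qed.


Lemma dist_sym (T : finType) (e : rel T) u v :
  symmetric e -> dist_ge3 e u v -> dist_ge3 e v u.
Proof.
move=> es /dist3P [H1 H2 H3]; apply/dist3P; split.
- by rewrite eq_sym.
- by rewrite es.
- by move=> m; rewrite andbC (es m u) (es v m); exact: H3.
Qed.

Section Back0.
Variables (T : finType) (e : rel T).
Hypotheses (esym : symmetric e) (eirr : irreflexive e) (conn : connected e).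
Hypothesis n6 : 6 <= #|T|.
Hypothesis Hmax : max_two_packing e (weak_supports e).

Local Notation W := (weak_supports e).

Definition sp (l : T) := odflt l [pick y | e l y].

Lemma sp_spec l : leaf e l -> e l (sp l) /\ forall y, e l y -> y = sp l.
Proof.
move/cards1P=> [s Hs].
have Hy y : e l y = (y == s) by have := congr1 (fun A : {set T} => y \in A) Hs; rewrite !inE.
rewrite /sp; case: pickP => [y Hly|H]; last by have := H s; rewrite Hy eqxx.
split=> // y'; rewrite Hy => /eqP ->; by move: Hly; rewrite Hy => /eqP.
Qed.

Lemma sp_notleaf l : leaf e l -> ~~ leaf e (sp l).
Proof.
move=> Hl; apply/negP=> Hs.
have [Hls Hu] := sp_spec Hl; have [Hsl Hu'] := sp_spec Hs.
have Hl' : l = sp (sp l) by apply: Hu'; rewrite esym.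
have Hst : forall p x, x \in [set l; sp l] -> path e x p -> last x p \in [set l; sp l].
  elim=> [|a p IH] x Hx //= /andP [Ha Hp]; apply: IH Hp.
  move: Hx; rewrite !inE => /orP [/eqP Ex|/eqP Ex]; subst x.
  - by rewrite (Hu a Ha) eqxx orbT.
  - by rewrite (Hu' a Ha) -Hl' eqxx.
have : #|T| <= 2.
  have c2 : #|[set l; sp l]| <= 2 by rewrite cards2; case: (_ != _).
  apply: leq_trans c2.
  rewrite -cardsT; apply: subset_leq_card; apply/subsetP=> y _.
  case/connectP: (conn l y) => p Hp ->; apply: Hst Hp; by rewrite !inE eqxx.
by case: #|T| n6 => [|[|[|n]]].
Qed.

Definition pl (s : T) := [pick y | e s y && leaf e y].
Definition Ls := [set l | leaf e l & pl (sp l) == Some l].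

Lemma L_pack : two_packing e Ls.
Proof.
move=> l1 l2; rewrite !inE => /andP [H1 P1] /andP [H2 P2] Hne.
have [E1 U1] := sp_spec H1; have [E2 U2] := sp_spec H2.
apply/dist3P; split=> //.
- apply/negP=> E; have := sp_notleaf H1; by rewrite -(U1 _ E) H2.
- move=> m; apply/negP=> /andP [Em Em2].
  have Ee1 := U1 _ Em; have Ee2 : m = sp l2 by apply: U2; rewrite esym.
  move: P1 P2; rewrite -Ee1 -Ee2 => /eqP -> /eqP [] E; by rewrite E eqxx in Hne.
Qed.

Definition lw (w : T) := odflt w (pl w).

Lemma lw_spec w : w \in W ->
  [/\ e w (lw w), leaf e (lw w), pl w = Some (lw w) & forall y, e w y -> leaf e y -> y = lw w].
Proof.
rewrite inE => /cards1P [y0 Hs].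
have Hy y : (e w y && leaf e y) = (y == y0).
  by have := congr1 (fun A : {set T} => y \in A) Hs; rewrite !inE.
rewrite /lw /pl; case: pickP => [y Hly|H]; last by have := H y0; rewrite Hy eqxx.
move: (Hly); rewrite Hy => /eqP ->; move: Hly; rewrite Hy => /eqP Ey; subst y.
have := Hy y0; rewrite eqxx => /andP [A B]; split=> // y' H1 H2.
by apply/eqP; rewrite -Hy H1.
Qed.

Lemma sp_lw w : w \in W -> sp (lw w) = w.
Proof.
move=> Hw; have [A B _ _] := lw_spec Hw.
have [_ U] := sp_spec B; by rewrite -(U w) // esym.
Qed.

Lemma lw_L w : w \in W -> lw w \in Ls.
Proof.
move=> Hw; have [A B C _] := lw_spec Hw.
by rewrite inE B sp_lw // C eqxx.
Qed.

Lemma L_eq : Ls = lw @: W.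
Proof.
have Hsub : lw @: W \subset Ls by apply/subsetP=> l /imsetP [w Hw ->]; exact: lw_L.
have Hc : #|lw @: W| = #|W|.
  by apply: card_in_imset => w1 w2 H1 H2 E; rewrite -(sp_lw H1) E sp_lw.
have H2 := proj2 Hmax _ L_pack.
apply/eqP; rewrite eq_sym eqEcard Hsub /= Hc; exact: H2.
Qed.

Lemma HLW l : leaf e l -> sp l \in W.
Proof.
move=> Hl; have [Els Ul] := sp_spec Hl.
case E: (pl (sp l)) => [l0|]; last first.
  by move: E; rewrite /pl; case: pickP => [//|H]; have := H l; rewrite esym Els Hl.
have : (e (sp l) l0 && leaf e l0) by move: E; rewrite /pl; case: pickP => // y Hy [] <-.
case/andP => H1 H2.
have [_ U0] := sp_spec H2.
have Hsp : sp l0 = sp l by rewrite -(U0 (sp l)) // esym.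
have : l0 \in Ls by rewrite inE H2 Hsp E eqxx.
by rewrite L_eq => /imsetP [w Hw Ew]; rewrite -Hsp Ew sp_lw.
Qed.

Lemma leafW l y : leaf e l -> e l y -> y \in W.
Proof. by move=> Hl Hy; have [_ U] := sp_spec Hl; rewrite (U _ Hy) HLW. Qed.

Lemma Hdom x : exists2 w, w \in W & (w == x) || e w x.
Proof.
case: (boolP [exists w in W, (w == x) || e w x]) => [/existsP [w /andP [H1 H2]]|Hn].
  by exists w.
exfalso.
have Hn' w : w \in W -> ((w == x) || e w x) = false.
  move=> Hw; apply/negbTE; apply: contra Hn => H; apply/existsP; exists w; by rewrite Hw.
have Hd l : l \in Ls -> dist_ge3 e x l.
  rewrite inE => /andP [Hl _]; have [Els U] := sp_spec Hl.
  have HW := HLW Hl.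
  apply/dist3P; split.
  - apply/negP=> /eqP Ex; subst x; have := Hn' _ HW; by rewrite esym Els orbT.
  - apply/negP=> Ex; have := Hn' _ HW; by rewrite -(U x) ?eqxx // esym.
  - move=> m; apply/negP=> /andP [E1 E2].
    have Em : m = sp l by apply: U; rewrite esym.
    have := Hn' _ HW; by rewrite -Em esym E1 orbT.
have HxL : x \notin Ls.
  apply/negP=> HL; have := Hd _ HL; by case/dist3P; rewrite eqxx.
have Hp : two_packing e (x |: Ls).
  move=> u v; rewrite !in_setU1 => /orP [/eqP ->|Hu] /orP [/eqP ->|Hv] Hne;
    by [rewrite eqxx in Hne | apply: Hd | apply: dist_sym => //; apply: Hd | apply: L_pack].
have := proj2 Hmax _ Hp.
rewrite cardsU1 HxL /=.
have -> : #|Ls| = #|W| by rewrite L_eq; apply: card_in_imset => w1 w2 H1 H2 E; rewrite -(sp_lw H1) E sp_lw.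
by rewrite ltnn.
Qed.

End Back0.


Section Back.
Variables (T : finType) (e : rel T).
Hypotheses (esym : symmetric e) (eirr : irreflexive e) (eacyc : acyclic e) (conn : connected e).
Hypothesis Wpack : two_packing e (weak_supports e).
Hypothesis Hdom : forall x, exists2 w, w \in weak_supports e & (w == x) || e w x.
Hypothesis leafW : forall l y, leaf e l -> e l y -> y \in weak_supports e.

Local Notation W := (weak_supports e).

Lemma neqE x y : e x y -> x != y.
Proof. by move=> H; apply/eqP=> E; subst; rewrite eirr in H. Qed.

Lemma nWW u v : u \in W -> v \in W -> ~~ e u v.
Proof.
move=> Hu Hv; apply/negP=> E.
by have /dist3P [_ H _] := Wpack Hu Hv (neqE E); rewrite E in H.
Qed.

Lemma nCN u v x : u \in W -> v \in W -> u != v -> e u x -> e v x -> False.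
Proof.
move=> Hu Hv Huv E1 E2.
have /dist3P [_ _ H] := Wpack Hu Hv Huv.
by have := H x; rewrite E1 esym E2.
Qed.

Lemma nbW u y : u \in W -> e u y -> y \notin W.
Proof. by move=> Hu E; apply/negP=> Hy; have := nWW Hu Hy; rewrite E. Qed.

Lemma tri a b c : e a b -> e b c -> e c a -> False.
Proof.
move=> E1 E2 E3.
have Hp : path e a [:: b; c] by rewrite /= E1 E2.
have U : uniq [:: a; b; c].
  by rewrite /= !inE !negb_or (neqE E1) (neqE E2) eq_sym (neqE E3).
by have := eacyc Hp U isT; rewrite /= E3.
Qed.

Lemma quad4 v u x x' y : v \in W -> u \in W -> v != u -> e v x -> e v x' -> e u y ->
  x != x' -> e x y -> e x' y -> False.
Proof.
move=> Hv Hu Hvu E1 E2 E3 Hxx E4 E5.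
have Hyw := nbW Hu E3.
have Hvy : v != y by apply/eqP=> E; subst; rewrite Hv in Hyw.
have Hxy : x != y by apply/eqP=> E; subst; apply: (nCN Hv Hu Hvu E1 E3).
have Hx'y : x' != y by apply/eqP=> E; subst; apply: (nCN Hv Hu Hvu E2 E3).
have Hp : path e v [:: x; y; x'] by rewrite /= E1 E4 esym E5.
have U : uniq [:: v; x; y; x'].
  by rewrite /= !inE !negb_or (neqE E1) (neqE E2) Hvy Hxy Hxx eq_sym Hx'y.
by have := eacyc Hp U isT; rewrite /= esym E2.
Qed.

Lemma hexa v u x y y' x' : v \in W -> u \in W -> v != u -> e v x -> e v x' ->
  e u y -> e u y' -> x != x' -> y != y' -> e x y -> e y' x' -> False.
Proof.
move=> Hv Hu Hvu E1 E2 E3 E4 Hxx Hyy E5 E6.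
have Hx := nbW Hv E1; have Hx' := nbW Hv E2; have Hy := nbW Hu E3; have Hy' := nbW Hu E4.
have D a b : a \in W -> b \notin W -> a != b by move=> Ha Hb; apply/eqP=> E; subst; rewrite Ha in Hb.
have D2 a b : e v a -> e u b -> a != b by move=> Ha Hb; apply/eqP=> E; subst; apply: (nCN Hv Hu Hvu Ha Hb).
have Hp : path e v [:: x; y; u; y'; x'] by rewrite /= E1 E5 esym E3 E4 E6.
have U : uniq [:: v; x; y; u; y'; x'].
  rewrite /= !inE !negb_or.
  rewrite (D _ _ Hv Hx) (D _ _ Hv Hy) Hvu (D _ _ Hv Hy') (D _ _ Hv Hx').
  rewrite (D2 _ _ E1 E3) eq_sym (D _ _ Hu Hx) (D2 _ _ E1 E4) Hxx.
  rewrite eq_sym (D _ _ Hu Hy) Hyy eq_sym (D2 _ _ E2 E3).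
  by rewrite (D _ _ Hu Hy') (D _ _ Hu Hx') eq_sym (D2 _ _ E2 E4).
by have := eacyc Hp U isT; rewrite /= esym E2.
Qed.

Definition own (x : T) : T := odflt x [pick w in W | (w == x) || e w x].

Lemma own_spec x : own x \in W /\ (own x == x) || e (own x) x.
Proof.
rewrite /own; case: pickP => [w /andP [H1 H2] //|H].
have [w Hw Hx] := Hdom x; by have := H w; rewrite Hw Hx.
Qed.

Lemma own_in x : own x \in W. Proof. by case: (own_spec x). Qed.

Lemma own_uniq x w : w \in W -> (w == x) || e w x -> own x = w.
Proof.
move=> Hw Hx; have [Ho Hox] := own_spec x.
case: (eqVneq (own x) w) => // Hne; exfalso.
case/orP: Hx => [/eqP Ew|Ew]; case/orP: Hox => [/eqP Eo|Eo].
- by rewrite Eo Ew eqxx in Hne.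
- by subst; have := nWW Ho Hw; rewrite Eo.
- by have := nWW Hw Ho; rewrite Eo Ew.
- exact: (nCN Ho Hw Hne Eo Ew).
Qed.

Lemma own_W x : x \in W -> own x = x.
Proof. by move=> Hx; apply: own_uniq; rewrite ?eqxx. Qed.

Lemma own_nW x : x \notin W -> e (own x) x.
Proof.
move=> Hx; case: (own_spec x) => Ho /orP [/eqP E|//].
by rewrite -E Ho in Hx.
Qed.

Lemma own_e w x : w \in W -> e w x -> own x = w.
Proof. by move=> Hw E; apply: own_uniq; rewrite ?E ?orbT. Qed.

Definition V : finType := {w : T | w \in W}.
Definition ownV (x : T) : V := exist _ (own x) (own_in x).

Lemma ownV_val (v : V) : ownV (val v) = v.
Proof. by apply: val_inj; rewrite /= own_W // (valP v). Qed.

Definition eR : rel V := fun u v => [exists x, exists y, [&& e (val u) x, e x y & e y (val v)]].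
Definition Ax (x : T) : {set V} := [set u : V | [exists y, e x y && e (val u) y]].
Definition Q (v : V) : {set T} := [set x | e (val v) x && ~~ leaf e x].
Definition PP (v : V) : {set {set V}} := Ax @: Q v.

Lemma eRP u v : reflect (exists x y, [/\ e (val u) x, e x y & e y (val v)]) (eR u v).
Proof.
apply: (iffP existsP) => [[x /existsP [y /and3P [H1 H2 H3]]]|[x [y [H1 H2 H3]]]].
  by exists x, y.
by exists x; apply/existsP; exists y; rewrite H1 H2 H3.
Qed.

Lemma AxP x u : reflect (exists y, e x y && e (val u) y) (u \in Ax x).
Proof. rewrite inE; exact: existsP. Qed.

Lemma eR_sym : symmetric eR.
Proof.
have H u v : eR u v -> eR v u.
  case/eRP=> x [y [H1 H2 H3]]; apply/eRP; exists y, x.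
  by split; rewrite esym.
by move=> u v; apply/idP/idP; apply: H.
Qed.

Lemma eR_irr : irreflexive eR.
Proof. move=> u; apply: negbTE; apply/negP; case/eRP=> x [y [H1 H2 H3]]; exact: (tri H1 H2 H3). Qed.

Definition g (x : T) : sub_raw V :=
  if x \in W then inl (inl (ownV x))
  else if leaf e x then inl (inr (ownV x)) else inr (ownV x, Ax x).

Lemma g_valid x : sub_valid PP (g x).
Proof.
rewrite /g; case: ifP => // HW; case: ifP => // Hl /=.
apply/imsetP; exists x => //; by rewrite inE own_nW ?HW // Hl.
Qed.

Definition f (x : T) : sub_vert PP := exist _ (g x) (g_valid x).

Lemma ownV_eq x y : (ownV x == ownV y) = (own x == own y).
Proof. by rewrite -val_eqE. Qed.

Lemma L1 x y : x \notin W -> y \in W -> (own x == y) = e x y.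
Proof.
move=> Hx Hy; apply/eqP/idP=> [<-|E]; first by rewrite esym own_nW.
by apply: own_e; rewrite // esym.
Qed.

Lemma ltt x y : x \notin W -> y \notin W ->
  [&& eR (ownV x) (ownV y), ownV y \in Ax x & ownV x \in Ax y] = e x y.
Proof.
move=> Hx Hy; apply/idP/idP=> [|E].
  case/and3P=> _ /AxP [y' /andP [E1 E2]] /AxP [x' /andP [E3 E4]].
  rewrite /= in E2 E4.
  case: (eqVneq x x') => [Exx|Hxx]; first by rewrite Exx esym.
  case: (eqVneq y y') => [Eyy|Hyy]; first by rewrite Eyy.
  have Hvu : own x != own y.
    apply/eqP=> Eo; apply: (tri (own_nW Hx) E1); by rewrite esym Eo.
  exfalso; apply: (hexa (own_in x) (own_in y) Hvu (own_nW Hx) E4 E2 (own_nW Hy) Hxx _ E1 E3).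
  by rewrite eq_sym.
apply/and3P; split.
- apply/eRP; exists x, y; split=> //; [exact: own_nW | by rewrite esym own_nW].
- apply/AxP; exists y; by rewrite E own_nW.
- apply/AxP; exists x; by rewrite esym E own_nW.
Qed.

Lemma fe x y : sub_adj eR (f x) (f y) = e x y.
Proof.
rewrite /sub_adj /= /g.
case: (boolP (x \in W)) => Hx; case: (boolP (y \in W)) => Hy.
- by rewrite (negbTE (nWW Hx Hy)).
- by case: ifP => _ /=; rewrite ownV_eq (own_W Hx) eq_sym L1 // esym.
- by case: ifP => _ /=; rewrite ownV_eq (own_W Hy) ?(eq_sym y) L1.
- case: ifP => Hxl; case: ifP => Hyl //=.
  + symmetry; apply: negbTE; apply/negP=> E; have := leafW Hxl E; by rewrite (negbTE Hy).
  + symmetry; apply: negbTE; apply/negP=> E; have := leafW Hxl E; by rewrite (negbTE Hy).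
  + symmetry; apply: negbTE; apply/negP=> E; rewrite esym in E; have := leafW Hyl E; by rewrite (negbTE Hx).
  + exact: ltt.
Qed.

Lemma ws_uniq w a b : w \in W -> e w a -> leaf e a -> e w b -> leaf e b -> a = b.
Proof.
rewrite inE => /cards1P [z Hz] Ha La Hb Lb.
have H c : e w c -> leaf e c -> c = z.
  move=> Hc Lc; have := congr1 (fun A : {set T} => c \in A) Hz.
  by rewrite !inE Hc Lc => H; apply/eqP; rewrite -H.
by rewrite (H a Ha La) (H b Hb Lb).
Qed.

Lemma nb2 x a : ~~ leaf e x -> e x a -> exists z, e x z && (z != a).
Proof.
move=> Hl Ha.
have : 1 < #|nbhd e x|.
  have : 0 < #|nbhd e x| by apply/card_gt0P; exists a; rewrite inE.
  by move: Hl; rewrite /leaf; case: #|nbhd e x| => [|[|n]].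
case/card_gt1P=> [z1 [z2 [H1 H2 H12]]]; rewrite !inE in H1 H2.
case: (eqVneq z1 a) => [E|N]; last by exists z1; rewrite H1 N.
by exists z2; rewrite H2 -E eq_sym H12.
Qed.

Lemma Ax_ne x : x \notin W -> ~~ leaf e x -> exists u, u \in Ax x.
Proof.
move=> Hx Hl; have Eo : e x (own x) by rewrite esym own_nW.
have [z /andP [Ez Nz]] := nb2 Hl Eo.
have Hz : z \notin W.
  apply/negP=> Hz; have Ezx : e z x by rewrite esym.
  exact: (nCN Hz (own_in x) Nz Ezx (own_nW Hx)).
by exists (ownV z); apply/AxP; exists z; rewrite Ez own_nW.
Qed.

Lemma Ax_disj x y u : x != y -> own x = own y -> x \notin W -> y \notin W ->
  u \in Ax x -> u \in Ax y -> False.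
Proof.
move=> Hxy Eo Hx Hy /AxP [y1 /andP [E1 E2]] /AxP [y2 /andP [E3 E4]].
have Hvx := own_nW Hx; have Hvy := own_nW Hy; rewrite -Eo in Hvy.
have Hvu : own x != val u.
  by apply/eqP=> E; apply: (tri Hvx E1); rewrite esym E.
case: (eqVneq y1 y2) => [E|N].
  subst y2; exact: (quad4 (own_in x) (valP u) Hvu Hvx Hvy E2 Hxy E1 E3).
by apply: (hexa (own_in x) (valP u) Hvu Hvx Hvy E2 E4 Hxy N E1); rewrite esym.
Qed.

Lemma f_inj : injective f.
Proof.
move=> x y /(congr1 val); rewrite /= /g.
case: (boolP (x \in W)) => Hx; case: (boolP (y \in W)) => Hy /=.
- by case; rewrite (own_W Hx) (own_W Hy).
- by case: ifP => _ [].
- by case: ifP => _ [].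
case: ifP => Hxl; case: ifP => Hyl; try by case.
- case=> Eo.
  apply: (ws_uniq (own_in x) (own_nW Hx) Hxl); by rewrite ?Eo ?own_nW.
- case=> Eo EA.
  case: (eqVneq x y) => // Hne; exfalso.
  have [u Hu] := Ax_ne Hx (negbT Hxl).
  by apply: (Ax_disj Hne Eo Hx Hy Hu); rewrite -EA.
Qed.

Lemma f_surj (s : sub_vert PP) : exists x, f x = s.
Proof.
case: s => [[[v|v]|[v A]] Hs].
- exists (val v); apply: val_inj; rewrite /= /g (valP v) ownV_val //.
- have Hv := valP v.
  have [l Hl] : exists l, [set w | e (val v) w & leaf e w] = [set l].
    by apply/cards1P; move: Hv; rewrite inE.
  have : l \in [set w | e (val v) w & leaf e w] by rewrite Hl set11.
  rewrite inE => /andP [E L].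
  exists l; apply: val_inj; rewrite /= /g (negbTE (nbW Hv E)) L.
  by congr (inl (inr _)); apply: val_inj; rewrite /= (own_e Hv E).
- have HA : A \in PP v := Hs.
  case/imsetP: HA => x Hx EA; rewrite inE in Hx; case/andP: Hx => E L.
  exists x; apply: val_inj; rewrite /= /g (negbTE (nbW (valP v) E)) (negbTE L) EA.
  by congr (inr (_, _)); apply: val_inj; rewrite /= (own_e (valP v) E).
Qed.

Lemma f_bij : bijective f.
Proof.
apply: (inj_card_bij f_inj).
have H : [set: sub_vert PP] \subset f @: [set: T].
  apply/subsetP=> s _; have [x <-] := f_surj s; exact: imset_f.
have := subset_leq_card H; rewrite cardsT card_imset ?cardsT //; exact: f_inj.
Qed.

Lemma PP_part v : partition (PP v) (nbhd eR v).
Proof.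
apply/and3P; split.
- apply/eqP/setP=> u; rewrite inE; apply/bigcupP/idP.
  + case=> B /imsetP [x Hx ->] /AxP [y /andP [E1 E2]].
    rewrite inE in Hx; case/andP: Hx => Ex _.
    by apply/eRP; exists x, y; rewrite esym in E2.
  + case/eRP=> x [y [E1 E2 E3]].
    exists (Ax x); last by apply/AxP; exists y; rewrite E2 esym E3.
    apply: imset_f; rewrite inE E1 /=; apply/negP=> Lx.
    by have := nWW (leafW Lx E2) (valP u); rewrite E3.
- apply/trivIsetP=> A B /imsetP [x Hx ->] /imsetP [y Hy ->] Hne.
  have Hxy : x != y by apply: contraNneq Hne => ->.
  rewrite !inE in Hx Hy; case/andP: Hx => Ex _; case/andP: Hy => Ey _.
  rewrite -setI_eq0; apply: contraT => /set0Pn [u]; rewrite inE => /andP [H1 H2]; exfalso.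
  apply: (Ax_disj Hxy _ (nbW (valP v) Ex) (nbW (valP v) Ey) H1 H2).
  by rewrite (own_e (valP v) Ex) (own_e (valP v) Ey).
- apply/negP=> /imsetP [x Hx E]; rewrite inE in Hx; case/andP: Hx => Ex Lx.
  have [u Hu] := Ax_ne (nbW (valP v) Ex) Lx.
  by rewrite -E inE in Hu.
Qed.

Lemma step x a : e x a -> connect eR (ownV x) (ownV a).
Proof.
move=> E; case: (eqVneq (own x) (own a)) => [Eo|Ne].
  by have -> : ownV x = ownV a by apply: val_inj.
apply: connect1.
have Hx : x \notin W.
  by apply/negP=> Hx; move: Ne; rewrite (own_W Hx) (own_e Hx E) eqxx.
have Ha : a \notin W.
  by apply/negP=> Ha; move: Ne; rewrite (own_W Ha) (own_e Ha (_ : e a x)) ?eqxx // esym.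
by apply/eRP; exists x, a; rewrite /= own_nW // E esym own_nW.
Qed.

Lemma eR_conn : connected eR.
Proof.
have H : forall p x, path e x p -> connect eR (ownV x) (ownV (last x p)).
  elim=> [|a p IH] x /=; first by rewrite connect0.
  case/andP=> E Hp; apply: connect_trans (step E) (IH _ Hp).
move=> u v; rewrite -(ownV_val u) -(ownV_val v).
case/connectP: (conn (val u) (val v)) => p Hp ->; exact: H.
Qed.

Lemma V_card : 6 <= #|T| -> 2 <= #|V|.
Proof.
move=> n6; rewrite /V card_sig.
case: (leqP 2 #|[pred x | x \in W]|) => // Hlt; exfalso.
have [x0 _] : exists x0, x0 \in [set: T].
  by apply/card_gt0P; rewrite cardsT; case: #|T| n6.
set w0 := own x0; have Hw0 : w0 \in W := own_in x0.
have HW w : w \in W -> w = w0.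
  move=> Hw; have /card_le1_eqP H : #|[pred x | x \in W]| <= 1 by [].
  have E := H w w0 Hw Hw0. by rewrite E.
have Hz z : z != w0 -> e w0 z.
  move=> Hz; have Hzw : z \notin W by apply: contra Hz => /HW ->.
  by have := own_nW Hzw; rewrite (HW _ (own_in z)).
have Hl z : z != w0 -> leaf e z.
  move=> Hz1; apply/cards1P; exists w0; apply/setP=> y; rewrite !inE.
  apply/idP/eqP=> [E|->]; last by rewrite esym Hz.
  apply/eqP; apply: contraT => Hy; exfalso.
  by apply: (tri (Hz _ Hz1) E); rewrite esym Hz.
have Hsub : [set~ w0] \subset [set w | e w0 w & leaf e w].
  by apply/subsetP=> z; rewrite !inE => Hz1; rewrite Hz // Hl.
have := subset_leq_card Hsub; rewrite cardsC1.
move: Hw0; rewrite inE /weak_support => /eqP ->.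
by case: #|T| n6 => [|[|[|n]]].
Qed.

Definition XY (a b : V) : T * T :=
  odflt (val a, val b) [pick xy : T * T | [&& e (val a) xy.1, e xy.1 xy.2 & e xy.2 (val b)]].

Lemma XY_spec a b : eR a b -> [/\ e (val a) (XY a b).1, e (XY a b).1 (XY a b).2 & e (XY a b).2 (val b)].
Proof.
rewrite /XY; case: pickP => [[x y] /and3P [H1 H2 H3] //|H].
case/eRP=> x [y [H1 H2 H3]]; have := H (x, y); by rewrite /= H1 H2 H3.
Qed.

Fixpoint tw (a : V) (ia : T) (q : seq V) : seq T :=
  match q with
  | [::] => [::]
  | b :: q' => (if ia == (XY a b).1 then [::] else [:: val a; (XY a b).1]) ++
               (XY a b).2 :: tw b (XY a b).2 q'
  end.

Definition ow (v : V) (z : T) := (z == val v) || e (val v) z.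

Lemma ow_inj u v z : ow u z -> ow v z -> u = v.
Proof.
move=> Hu Hv; apply: val_inj.
have Eu : own z = val u by apply: own_uniq (valP u) _; move: Hu; rewrite /ow eq_sym.
have Ev : own z = val v by apply: own_uniq (valP v) _; move: Hv; rewrite /ow eq_sym.
by rewrite -Eu Ev.
Qed.

Lemma tw_path a ia q : path eR a q -> e (val a) ia -> path e ia (tw a ia q).
Proof.
elim: q a ia => [|b q IH] a ia //= /andP [Hab Hq] Ha.
have [E1 E2 E3] := XY_spec Hab.
rewrite cat_path; case: ifP => Hi /=.
- by rewrite -(eqP Hi) in E2 *; rewrite E2 /= IH // esym.
- by rewrite esym Ha E1 E2 /= IH // esym.
Qed.

Lemma tw_lastadj a ia q : path eR a q -> e (val a) ia ->
  e (val (last a q)) (last ia (tw a ia q)).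
Proof.
elim: q a ia => [|b q IH] a ia //= /andP [Hab Hq] Ha.
have [E1 E2 E3] := XY_spec Hab.
rewrite last_cat /=; apply: IH => //; by rewrite esym.
Qed.

Lemma tw_mem a ia q z : path eR a q -> z \in tw a ia q -> exists2 v, v \in a :: q & ow v z.
Proof.
elim: q a ia => [|b q IH] a ia //= /andP [Hab Hq].
have [E1 E2 E3] := XY_spec Hab.
rewrite mem_cat => /orP [H|].
  exists a; first by rewrite inE eqxx.
  by move: H; case: ifP => _; rewrite ?inE // => /orP [/eqP ->|/eqP ->]; rewrite /ow ?eqxx ?E1 ?orbT.
rewrite inE => /orP [/eqP ->|H].
  by exists b; rewrite ?inE ?eqxx ?orbT // /ow esym E3 orbT.
have [v Hv Hov] := IH _ _ Hq H; exists v => //; by rewrite inE Hv orbT.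
Qed.

Lemma tw_size a ia q : size q <= size (tw a ia q).
Proof.
elim: q a ia => [|b q IH] a ia //=.
by rewrite size_cat /= addnS ltnS (leq_trans (IH b (XY a b).2)) // leq_addl.
Qed.

Lemma tw_uniq a ia q : path eR a q -> uniq (a :: q) -> e (val a) ia -> uniq (ia :: tw a ia q).
Proof.
elim: q a ia => [|b q IH] a ia; first by [].
move=> /andP [Hab Hq] /andP [Ha Hu] Hia; rewrite [tw _ _ _]/=.
have [E1 E2 E3] := XY_spec Hab.
have Hfront : forall z, z \in ia :: (if ia == (XY a b).1 then [::] else [:: val a; (XY a b).1]) -> ow a z.
  move=> z; rewrite inE => /orP [/eqP ->|]; first by rewrite /ow Hia orbT.
  by case: ifP => _; rewrite ?inE // => /orP [/eqP ->|/eqP ->]; rewrite /ow ?eqxx ?E1 ?orbT.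
rewrite -cat_cons cat_uniq; apply/and3P; split.
- case: ifP => Hi /=; rewrite ?inE ?negb_or //.
  rewrite Hi eq_sym (neqE Hia) /= andbT; exact: neqE E1.
- apply/hasPn=> z Hz; apply/negP=> Hz2.
  have Hoa := Hfront _ Hz2.
  have [v Hv Hov] : exists2 v, v \in b :: q & ow v z.
    move: Hz; rewrite inE => /orP [/eqP ->|H].
      by exists b; rewrite ?inE ?eqxx // /ow esym E3 orbT.
    have [v Hv Hov] := tw_mem Hq H; by exists v.
  by move: Ha; rewrite (ow_inj Hoa Hov) Hv.
- apply: IH => //; by rewrite esym.
Qed.

Lemma tw_lastown a ia q z : path eR a q -> uniq (a :: q) -> e (val a) ia ->
  z \in ia :: tw a ia q -> ow (last a q) z -> z = last ia (tw a ia q).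
Proof.
elim: q a ia => [|b q IH] a ia /=.
  by move=> _ _ _; rewrite inE => /eqP.
move=> /andP [Hab Hq] /andP [Ha Hu] Hia.
have [E1 E2 E3] := XY_spec Hab.
rewrite -cat_cons mem_cat last_cat /= => /orP [Hz Ho|Hz Ho].
  have Hoa : ow a z.
    move: Hz; rewrite inE => /orP [/eqP ->|]; first by rewrite /ow Hia orbT.
    by case: ifP => _; rewrite ?inE // => /orP [/eqP ->|/eqP ->]; rewrite /ow ?eqxx ?E1 ?orbT.
  by move: Ha; rewrite (ow_inj Hoa Ho) mem_last.
apply: IH => //; by rewrite esym.
Qed.

Lemma eR_acyc : acyclic eR.
Proof.
move=> c0 p Hp Hu Hs; apply/negP=> Hc.
set ck := last c0 p.
have [X1 X2 X3] := XY_spec Hc.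
set in0 := (XY ck c0).2; set ok := (XY ck c0).1.
have Hin0 : e (val c0) in0 by rewrite esym.
set ik := last in0 (tw c0 in0 p).
have Hik : e (val ck) ik := tw_lastadj Hp Hin0.
set front := if ik == ok then [::] else [:: val ck; ok].
have Hpath : path e in0 (tw c0 in0 p ++ front).
  rewrite cat_path tw_path //= -/ik /front; case: ifP => //= _.
  by rewrite esym Hik X1.
have Huniq : uniq (in0 :: (tw c0 in0 p ++ front)).
  rewrite -cat_cons cat_uniq tw_uniq //=; apply/andP; split.
  - apply/hasPn=> z Hz; apply/negP=> Hz2.
    have Hoz : ow ck z.
      move: Hz; rewrite /front; case: ifP => _; rewrite ?inE // => /orP [/eqP ->|/eqP ->];
        by rewrite /ow ?eqxx ?X1 ?orbT.
    have Ez := tw_lastown Hp Hu Hin0 Hz2 Hoz; rewrite -/ik in Ez.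
    move: Hz; rewrite /front Ez; case: ifP => Hi; rewrite ?inE //.
    by rewrite eq_sym (negbTE (neqE Hik)) Hi.
  - rewrite /front; case: ifP => //= _; by rewrite inE (neqE X1).
have Hsize : 2 <= size (tw c0 in0 p ++ front).
  by rewrite size_cat (leq_trans Hs) // (leq_trans (tw_size c0 in0 p)) // leq_addr.
have := eacyc Hpath Huniq Hsize.
rewrite last_cat -/ik /front; case: ifP => [/eqP ->|_] /=; by rewrite X2.
Qed.

End Back.


Unset Implicit Arguments.
Theorem mainTheorem5 (T : finType) (e : rel T) :
  is_tree e -> 6 <= #|T| ->
  (in_Oprime e <-> max_two_packing e (weak_supports e)).
Proof.
move=> [[esym eirr] [conn eacyc]] n6; split; first exact: forward.
move=> Hmax.
have Hd := Hdom esym conn n6 Hmax.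
have Hl := leafW esym conn n6 Hmax.
have Wp := proj1 Hmax.
exists (V e), (@eR T e); split.
  split; first split.
  - exact: eR_sym.
  - exact: eR_irr.
  split.
  - by apply: eR_conn.
  - by apply: eR_acyc.
split; first by apply: V_card.
exists (@PP T e); split; first by move=> v; apply: PP_part.
eexists; split; first by apply: f_bij.
by move=> x y; apply: fe.
Qed.
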